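(* Let $S$ be a monoid such that the words $yxxty$ and $ytxxy$ (with $x,y,t$ distinct variables) are isoterms for $S$. Then for every $n\ge1$ the word $z_1t_1z_2t_2\cdots z_nt_n\,xx\,z_1z_2\cdots z_n$ (with $x,z_1,\dots,z_n,t_1,\dots,t_n$ distinct variables) is an isoterm for $S$.
   Context: Words are elements of the free semigroup over a countably infinite alphabet of variables. A monoid $S$ satisfies an identity $\mathbf u\approx\mathbf v$ if both sides are equal under every evaluation of the variables in $S$. A word $\mathbf w$ is an isoterm for $S$ if $S$ satisfies no identity $\mathbf w\approx\mathbf w'$ with $\mathbf w'\ne\mathbf w$. *)

(* Defs.v *)
From mathcomp Require Import all_boot.
Set Implicit Arguments. Unset Strict Implicit. Unset Printing Implicit Defensive.

Record monoid := Monoid {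
  mcar :> Type;
  mop : mcar -> mcar -> mcar;
  munit : mcar;
  mopA : forall a b c, mop a (mop b c) = mop (mop a b) c;
  mop1 : forall a, mop munit a = a;
  mopr1 : forall a, mop a munit = a
}.

Definition word := seq nat.
Definition is_word (w : word) : Prop := w <> [::].

Definition eval (S : monoid) (phi : nat -> S) (w : word) : S :=
  foldr (fun v acc => mop (phi v) acc) (munit S) w.

Definition satisfies (S : monoid) (u v : word) : Prop :=
  forall phi : nat -> S, eval phi u = eval phi v.

Definition isoterm (S : monoid) (w : word) : Prop :=
  forall w' : word, is_word w' -> satisfies S w w' -> w' = w.

(* Main.v *)
Require Import Defs.
From mathcomp Require Import all_boot zify.
From Stdlib Require Import Lia.

Definition proj (K : seq nat) (u : seq nat) := filter (fun v => v \in K) u.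

Lemma eval_cat (S : monoid) (phi : nat -> S) u v :
  eval phi (u ++ v) = mop (eval phi u) (eval phi v).
Proof.
elim: u => [|a u IH] /=; first by rewrite mop1.
by rewrite IH mopA.
Qed.

Lemma sat_filter (S : monoid) u v (P : pred nat) :
  satisfies S u v -> satisfies S (filter P u) (filter P v).
Proof.
move=> H phi.
pose psi := fun v => if P v then phi v else munit S.
have E : forall w, eval phi (filter P w) = eval psi w.
  elim=> [|a w IH] //=; rewrite /psi; case: (P a) => /=; first by rewrite IH.
  by rewrite mop1.
by rewrite !E; apply: H.
Qed.

Lemma iso_sym (S : monoid) u v :
  isoterm S u -> is_word u -> satisfies S u v -> v = u.
Proof.
move=> Hi Hw Hs.
case: v Hs => [|b v] Hs.
  have : u ++ u = u.
    apply: Hi; first by move: Hw; clear; case: u.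
    move=> phi; by rewrite eval_cat !(Hs phi) /= mop1.
  move=> /(congr1 size); rewrite size_cat => e.
  move: Hw e; clear; case: u => // a u _ /=.
  lia.
by apply: Hi => // phi; rewrite Hs.
Qed.

Lemma pair_det (u v : seq nat) :
  (forall a b, proj [:: a; b] u = proj [:: a; b] v) -> u = v.
Proof.
elim: u v => [|a u IH] [|b v] H //.
- by move: (H b b); rewrite /proj /= !inE eqxx.
- by move: (H a a); rewrite /proj /= !inE eqxx.
have ab : a = b.
  by move: (H a b); rewrite /proj /= !inE !eqxx /= orbT => -[].
subst b; congr cons; apply: IH => c d.
move: (H c d); rewrite /proj /=; case: ifP => // _ [] //.
Qed.

Lemma proj_proj K K' u : (forall v, v \in K -> v \in K') -> proj K (proj K' u) = proj K u.
Proof.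
move=> HK; rewrite /proj -filter_predI; apply: eq_filter => v /=.
by case E: (v \in K) => //=; rewrite HK.
Qed.

Lemma index_g (L X : seq nat) : uniq L -> all (fun k => k < size L) X ->
  map (fun v => index v L) (map (nth 0 L) X) = X.
Proof.
move=> uL hX; rewrite -map_comp; apply: map_id_in => k /(allP hX) hk /=.
by rewrite index_uniq.
Qed.

Lemma map_g_inj (L X Y : seq nat) : uniq L -> all (fun k => k < size L) X ->
  all (fun k => k < size L) Y -> map (nth 0 L) X = map (nth 0 L) Y -> X = Y.
Proof.
move=> uL hX hY e.
by rewrite -(@index_g L X uL hX) -(@index_g L Y uL hY) e.
Qed.

Lemma gfilter (L K c : seq nat) : uniq L -> all (fun k => k < size L) c ->
  all (fun k => k < size L) K ->
  proj (map (nth 0 L) K) (map (nth 0 L) c) = map (nth 0 L) (proj K c).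
Proof.
move=> uL hc hK; rewrite /proj filter_map; congr map; apply: eq_in_filter => k hk /=.
apply/idP/idP; last by move=> kK; apply: map_f.
move/mapP=> [k' k'K e].
have := congr1 (fun v => index v L) e.
by rewrite !index_uniq // => [->//||]; [apply: (allP hK)| apply: (allP hc)].
Qed.

Definition iso5 (s : seq nat) :=
  if s is [:: a; b; c; d; e] then (a == e) && (c == d) && uniq [:: a; b; c] else false.

Lemma iso5_iso (S : monoid)
  (H2 : forall x y t : nat, uniq [:: x; y; t] -> isoterm S [:: y; t; x; x; y])
  (L s : seq nat) : uniq L -> iso5 s -> all (fun k => k < size L) s ->
  isoterm S (map (nth 0 L) s).
Proof.
move=> uL; case: s => [|a [|b [|c [|d [|e [|]]]]]] //= /andP[/andP[/eqP ae /eqP cd] u].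
subst e d => /and5P[ha hb hc _ _].
apply: H2.
have -> : [:: nth 0 L c; nth 0 L a; nth 0 L b] = map (nth 0 L) [:: c; a; b] by [].
rewrite map_inj_in_uniq.
  by have -> : [:: c; a; b] = rot 2 [:: a; b; c] by []; rewrite rot_uniq.
have hs : forall p, p \in [:: c; a; b] -> p < size L.
  by move=> p; rewrite !inE => /or3P[]/eqP->.
move=> p q hp hq e; have := congr1 (fun v => index v L) e.
by rewrite !index_uniq // hs.
Qed.

Definition base5 := [:: 0; 0; 1; 2; 2; 3; 4; 4].
Definition wpat := [:: 0; 1; 2; 3; 4; 4; 0; 2].
Definition Ks := [:: [:: 0; 1; 2]; [:: 1; 2; 4]; [:: 0; 2; 3]].

Definition chk := all (fun c =>
  ((proj [:: 0; 1; 4] c == [:: 0; 1; 4; 4; 0]) && (proj [:: 2; 3; 4] c == [:: 2; 3; 4; 4; 2]))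
  ==> ((c == wpat) || has (fun K => iso5 (proj K c) && (proj K c != proj K wpat)) Ks))
  (permutations base5).

Lemma chk_true : chk = true.
Proof. by vm_compute. Qed.

Lemma perm_base c : all (fun k => k < 5) c ->
  proj [:: 0; 1; 4] c = [:: 0; 1; 4; 4; 0] -> proj [:: 2; 3; 4] c = [:: 2; 3; 4; 4; 2] ->
  perm_eq c base5.
Proof.
move=> hc h1 h2; apply/allP => v _; apply/eqP.
case E1: (v \in [:: 0; 1; 4]).
  have -> : count_mem v c = count_mem v (proj [:: 0; 1; 4] c).
    rewrite /proj count_filter; apply: eq_count => w /=.
    by case: eqP => // ->; rewrite E1.
  by rewrite h1; move: E1; rewrite !inE => /or3P[]/eqP->.
case E2: (v \in [:: 2; 3; 4]).
  have -> : count_mem v c = count_mem v (proj [:: 2; 3; 4] c).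
    rewrite /proj count_filter; apply: eq_count => w /=.
    by case: eqP => // ->; rewrite E2.
  by rewrite h2; move: E2; rewrite !inE => /or3P[]/eqP->.
have nb : v \notin base5.
  by move: E1 E2; rewrite !inE; do 5 (case: eqP => //).
rewrite (count_memPn nb); apply/count_memPn; apply/negP => vc.
have := allP hc v vc; move: E1 E2; rewrite !inE.
by do 5 (case: eqP => //); lia.
Qed.

Lemma cross_fin c : all (fun k => k < 5) c ->
  proj [:: 0; 1; 4] c = [:: 0; 1; 4; 4; 0] -> proj [:: 2; 3; 4] c = [:: 2; 3; 4; 4; 2] ->
  c = wpat \/ exists2 K, K \in Ks & iso5 (proj K c) && (proj K c != proj K wpat).
Proof.
move=> hc h1 h2.
have : chk by rewrite chk_true.
rewrite /chk => /allP /(_ c).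
rewrite mem_permutations perm_base // h1 h2 !eqxx => /(_ isT) /orP[/eqP->|H].
  by left.
by right; apply/hasP.
Qed.

Definition Wd n x (z t : nat -> nat) :=
  flatten [seq [:: z i; t i] | i <- iota 0 n] ++ [:: x; x] ++ [seq z i | i <- iota 0 n].

Lemma flat_sub (P : pred nat) (F : nat -> seq nat) (Q : pred nat) s :
  (forall i, i \in s -> ~~ Q i -> filter P (F i) = [::]) ->
  filter P (flatten (map F s)) = filter P (flatten (map F (filter Q s))).
Proof.
elim: s => [|a s IH] H //=.
rewrite filter_cat IH; last by move=> i hi; apply: H; rewrite inE hi orbT.
case Qa: (Q a) => /=; first by rewrite filter_cat.
by rewrite H ?inE ?eqxx ?Qa.
Qed.

Lemma map_sub (P : pred nat) (z : nat -> nat) (Q : pred nat) s :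
  (forall i, i \in s -> ~~ Q i -> ~~ P (z i)) ->
  filter P (map z s) = filter P (map z (filter Q s)).
Proof.
elim: s => [|a s IH] H //=.
rewrite IH; last by move=> i hi; apply: H; rewrite inE hi orbT.
case Qa: (Q a) => //=.
by rewrite (negbTE (H a _ _)) ?inE ?eqxx ?Qa.
Qed.

Lemma iota_filter1 n k : k < n -> filter (pred1 k) (iota 0 n) = [:: k].
Proof.
move=> hk; apply: (irr_sorted_eq ltn_trans ltnn).
- exact: (sorted_filter ltn_trans _ (iota_ltn_sorted 0 n)).
- by [].
move=> v; rewrite mem_filter mem_iota !inE; by apply/idP/idP; lia.
Qed.

Lemma iota_filter2 n i j : i < j -> j < n ->
  filter (fun l => (l == i) || (l == j)) (iota 0 n) = [:: i; j].
Proof.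
move=> hij hj; apply: (irr_sorted_eq ltn_trans ltnn).
- exact: (sorted_filter ltn_trans _ (iota_ltn_sorted 0 n)).
- by rewrite /= hij.
move=> v; rewrite mem_filter mem_iota !inE.
by apply/idP/idP; lia.
Qed.

Lemma W_gen n x (z t : nat -> nat) (P Q : pred nat) :
  (forall i, i < n -> ~~ Q i -> ~~ P (z i) && ~~ P (t i)) ->
  filter P (Wd n x z t) = filter P (flatten [seq [:: z i; t i] | i <- filter Q (iota 0 n)]
     ++ [:: x; x] ++ [seq z i | i <- filter Q (iota 0 n)]).
Proof.
move=> H; rewrite /Wd !filter_cat (@flat_sub P _ Q).
  rewrite (@map_sub P z Q) // => i; rewrite mem_iota => /andP[_ hi] /(H i hi) /andP[].
  by [].
move=> i; rewrite mem_iota => /andP[_ hi] /(H i hi) /andP[h1 h2] /=.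
by rewrite (negbTE h1) (negbTE h2).
Qed.

Definition Lt n x (z t : nat -> nat) := x :: [seq z i | i <- iota 0 n] ++ [seq t i | i <- iota 0 n].

Lemma blockE (S : monoid)
  (H2 : forall x y t : nat, uniq [:: x; y; t] -> isoterm S [:: y; t; x; x; y])
  n x (z t : nat -> nat) w'
  (Hsat : forall P : pred nat, satisfies S (filter P (Wd n x z t)) (filter P w'))
  (zz : forall i j, i < n -> j < n -> (z i == z j) = (i == j))
  (zt : forall i j, i < n -> j < n -> (z i == t j) = false)
  (xz : forall i, i < n -> (x == z i) = false)
  (xt : forall i, i < n -> (x == t i) = false)
  (tt : forall i j, i < n -> j < n -> (t i == t j) = (i == j))
  k (hk : k < n) (e : seq nat)
  (he : forall v, v \in e -> (v \in [:: z k; t k; x]) || (v \notin Lt n x z t)) :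
  proj [:: z k, t k, x & e] w' = [:: z k; t k; x; x; z k] /\
  proj [:: z k, t k, x & e] (Wd n x z t) = [:: z k; t k; x; x; z k].
Proof.
have HW : proj [:: z k, t k, x & e] (Wd n x z t) = [:: z k; t k; x; x; z k].
  rewrite /proj (@W_gen _ _ _ _ _ (pred1 k)).
    rewrite iota_filter1 //; apply/all_filterP; rewrite /= !inE !eqxx /= !orbT //.
  move=> i hi /= nik.
  have zin : z i \in Lt n x z t by rewrite inE mem_cat map_f ?mem_iota ?orbT.
  have tin : t i \in Lt n x z t by rewrite inE mem_cat (map_f t) ?mem_iota ?orbT.
  rewrite !inE zz // zt // (eq_sym (z i) x) xz // (eq_sym (t i)) zt //.
  rewrite (eq_sym (t i)) tt // (eq_sym (t i) x) xt // (negbTE nik) /=.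
  rewrite (eq_sym k i) (negbTE nik) /=.
  apply/andP; split; apply/negP => H; move: (he _ H).
    rewrite zin /= orbF !inE.
    by rewrite zz // zt // (eq_sym (z i) x) xz // (negbTE nik).
  rewrite tin /= orbF !inE.
  by rewrite (eq_sym (t i)) zt // tt // (eq_sym (t i) x) xt // (negbTE nik).
split => //.
have := Hsat (fun v => v \in [:: z k, t k, x & e]).
rewrite -/(proj _ (Wd n x z t)) HW => hs.
have U : uniq [:: x; z k; t k].
  by rewrite /= !inE xz // xt // zt.
have nw : is_word [:: z k; t k; x; x; z k] by [].
exact: (@iso_sym S _ _ (H2 _ _ _ U) nw hs).
Qed.

Lemma crossE (S : monoid)
  (H2 : forall x y t : nat, uniq [:: x; y; t] -> isoterm S [:: y; t; x; x; y])
  n x (z t : nat -> nat) w'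
  (Hsat : forall P : pred nat, satisfies S (filter P (Wd n x z t)) (filter P w'))
  (zz : forall i j, i < n -> j < n -> (z i == z j) = (i == j))
  (zt : forall i j, i < n -> j < n -> (z i == t j) = false)
  (xz : forall i, i < n -> (x == z i) = false)
  (xt : forall i, i < n -> (x == t i) = false)
  (tt : forall i j, i < n -> j < n -> (t i == t j) = (i == j))
  i j (hij : i < j) (hj : j < n) :
  proj [:: z i; t i; z j; t j; x] w' = proj [:: z i; t i; z j; t j; x] (Wd n x z t).
Proof.
have hi : i < n by lia.
set L5 := [:: z i; t i; z j; t j; x].
have nij : (i == j) = false by apply/eqP; lia.
have uL5 : uniq L5.
  rewrite /L5 /= !inE (zt i i) // (zz i j) // (zt i j) // (eq_sym (z i) x) (xz i) //.
  rewrite (eq_sym (t i)) (zt j i) // (tt i j) // (eq_sym (t i) x) (xt i) //.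
  by rewrite (zt j j) // (eq_sym (z j) x) (xz j) // (eq_sym (t j) x) (xt j) // nij.
have blk : forall k, k < n -> proj [:: z k; t k; x] w' = [:: z k; t k; x; x; z k].
  by move=> k hk; case: (@blockE S H2 n x z t w' Hsat zz zt xz xt tt k hk [::] _).
set u := proj L5 w'.
set c := map (fun v => index v L5) u.
have hu : forall v, v \in u -> v \in L5 by move=> v; rewrite mem_filter => /andP[].
have hc : all (fun k => k < size L5) c.
  by apply/allP => k /mapP[v vu ->]; rewrite index_mem hu.
have hue : u = map (nth 0 L5) c.
  rewrite /c -map_comp map_id_in // => v vu /=; exact: nth_index (hu v vu).
have allf : forall K, all (fun k => k < size L5) (proj K c).
  by move=> K; apply/allP => k; rewrite mem_filter => /andP[_ /(allP hc)].
have h1 : proj [:: 0; 1; 4] c = [:: 0; 1; 4; 4; 0].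
  apply: (@map_g_inj L5) => //; rewrite -gfilter //.
  have -> : map (nth 0 L5) [:: 0; 1; 4] = [:: z i; t i; x] by [].
  rewrite -hue /u proj_proj ?blk //.
  by move=> v; rewrite !inE => /or3P[]/eqP->; rewrite eqxx ?orbT.
have h2 : proj [:: 2; 3; 4] c = [:: 2; 3; 4; 4; 2].
  apply: (@map_g_inj L5) => //; rewrite -gfilter //.
  have -> : map (nth 0 L5) [:: 2; 3; 4] = [:: z j; t j; x] by [].
  rewrite -hue /u proj_proj ?blk //.
  by move=> v; rewrite !inE => /or3P[]/eqP->; rewrite eqxx ?orbT.
have hW5 : proj L5 (Wd n x z t) = map (nth 0 L5) wpat.
  rewrite /proj (@W_gen _ _ _ _ _ (fun l => (l == i) || (l == j))).
    rewrite iota_filter2 //; apply/all_filterP.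
    by rewrite /= !inE !eqxx /= !orbT.
  move=> k hk /= /norP[nki nkj].
  rewrite !inE zz // zt // zz // zt // (eq_sym (z k) x) xz // (negbTE nki) (negbTE nkj) /=.
  by rewrite (eq_sym (t k)) zt // tt // (eq_sym (t k)) zt // tt // (eq_sym (t k) x) xt // (negbTE nki) (negbTE nkj).
have hc5 : all (fun k => k < 5) c by exact: hc.
case: (@cross_fin c hc5 h1 h2) => [hcw | [K KK /andP[hiso hne]]].
  by rewrite hW5 -hcw -hue.
exfalso.
have hK : all (fun k => k < size L5) K.
  by move: KK; rewrite !inE => /or3P[]/eqP->.
have hKsub : forall v, v \in map (nth 0 L5) K -> v \in L5.
  by move=> v /mapP[k kK ->]; apply: mem_nth; apply: (allP hK).
have e1 : proj (map (nth 0 L5) K) w' = map (nth 0 L5) (proj K c).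
  by rewrite -(@proj_proj _ _ w' hKsub) -/u hue gfilter.
have e2 : proj (map (nth 0 L5) K) (Wd n x z t) = map (nth 0 L5) (proj K wpat).
  by rewrite -(@proj_proj _ _ _ hKsub) hW5 gfilter.
have hs : satisfies S (map (nth 0 L5) (proj K c)) (map (nth 0 L5) (proj K wpat)).
  by move=> phi; rewrite -e1 -e2; symmetry; apply: Hsat.
have nw : is_word (map (nth 0 L5) (proj K c)).
  by move: hiso; case: (proj K c).
have := @iso_sym S _ _ (@iso5_iso S H2 L5 _ uL5 hiso (allf K)) nw hs.
have hX : all (fun k => k < size L5) (proj K wpat).
  apply/allP => k; rewrite mem_filter => /andP[_].
  rewrite !inE => H; repeat (case/orP: H => [/eqP->//|H]); by move/eqP: H => ->.
move=> /(@map_g_inj L5 _ _ uL5 hX (allf K)) E.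
by rewrite E eqxx in hne.
Qed.

Lemma uniq_map_inj (f : nat -> nat) s i j :
  uniq (map f s) -> i \in s -> j \in s -> f i = f j -> i = j.
Proof.
elim: s => //= a s IH /andP[fa us]; rewrite !inE.
case/orP=> [/eqP->|hi]; case/orP=> [/eqP->|hj] e //.
- by move: fa; rewrite e map_f.
- by move: fa; rewrite -e map_f.
- exact: IH.
Qed.

Theorem lemma3p7 (S : monoid)
  (H1 : forall x y t : nat, uniq [:: x; y; t] -> isoterm S [:: y; x; x; t; y])
  (H2 : forall x y t : nat, uniq [:: x; y; t] -> isoterm S [:: y; t; x; x; y]) :
  forall (n : nat) (x : nat) (z t : nat -> nat),
    1 <= n ->
    uniq (x :: [seq z i | i <- iota 0 n] ++ [seq t i | i <- iota 0 n]) ->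
    isoterm S (flatten [seq [:: z i; t i] | i <- iota 0 n]
               ++ [:: x; x] ++ [seq z i | i <- iota 0 n]).
Proof.
move=> n x z t hn hu w' Hw' Hs.
change (w' = Wd n x z t).
have Hsat : forall P : pred nat, satisfies S (filter P (Wd n x z t)) (filter P w').
  by move=> P; apply: sat_filter.
move: hu => /= /andP[xn]; rewrite cat_uniq => /and3P[uA hAB uB].
have mi : forall i, i < n -> i \in iota 0 n by move=> i hi; rewrite mem_iota.
have zz : forall i j, i < n -> j < n -> (z i == z j) = (i == j).
  move=> i j hi hj; apply/eqP/eqP => [e|->//].
  exact: (@uniq_map_inj z (iota 0 n) i j uA (mi _ hi) (mi _ hj) e).
have tt : forall i j, i < n -> j < n -> (t i == t j) = (i == j).
  move=> i j hi hj; apply/eqP/eqP => [e|->//].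
  exact: (@uniq_map_inj t (iota 0 n) i j uB (mi _ hi) (mi _ hj) e).
have zt : forall i j, i < n -> j < n -> (z i == t j) = false.
  move=> i j hi hj; apply/negbTE/negP => /eqP e.
  apply: (negP hAB); apply/hasP; exists (t j); first by rewrite map_f ?mi.
  by rewrite /= -e map_f ?mi.
have xz : forall i, i < n -> (x == z i) = false.
  by move=> i hi; apply/negbTE/negP => /eqP e; move: xn; rewrite mem_cat e map_f ?mi.
have xt : forall i, i < n -> (x == t i) = false.
  by move=> i hi; apply/negbTE/negP => /eqP e; move: xn; rewrite mem_cat e (map_f t) ?mi ?orbT.
have subproj : forall K K', (forall v, v \in K -> v \in K') ->
    proj K' w' = proj K' (Wd n x z t) -> proj K w' = proj K (Wd n x z t).
  by move=> K K' HK E; rewrite -(@proj_proj _ _ w' HK) E proj_proj.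
have cls : forall a, (forall k, k < n -> (a \in [:: z k; t k; x]) || (a \notin Lt n x z t))
    \/ exists2 l, l < n & (a = z l \/ a = t l).
  move=> a; case Ha: (a \in Lt n x z t); last by left=> k _; rewrite orbT.
  move: Ha; rewrite /Lt in_cons mem_cat => /orP[/eqP->|/orP[/mapP[l hl ->]|/mapP[l hl ->]]].
  - by left=> k _; apply/orP; left; rewrite !inE eqxx !orbT.
  - right; exists l; [by move: hl; rewrite mem_iota; lia | by left].
  - right; exists l; [by move: hl; rewrite mem_iota; lia | by right].
have block : forall k a b, k < n ->
    (a \in [:: z k; t k; x]) || (a \notin Lt n x z t) ->
    (b \in [:: z k; t k; x]) || (b \notin Lt n x z t) ->
    proj [:: a; b] w' = proj [:: a; b] (Wd n x z t).
  move=> k a b hk oa ob.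
  have he : forall v, v \in [:: a; b] ->
      (v \in [:: z k; t k; x]) || (v \notin Lt n x z t).
    move=> v vab; have : (v == a) || (v == b) by move: vab; rewrite !inE.
    by case/orP=> /eqP->.
  case: (@blockE S H2 n x z t w' Hsat zz zt xz xt tt k hk [:: a; b] he) => e1 e2.
  apply: (subproj _ [:: z k, t k, x & [:: a; b]]); last by rewrite e1 e2.
  by move=> v; rewrite !inE => /orP[]->; rewrite !orbT.
have okb : forall l b, l < n -> (b = z l \/ b = t l) ->
    (b \in [:: z l; t l; x]) || (b \notin Lt n x z t).
  by move=> l b hl [->|->]; rewrite !inE eqxx ?orbT.
apply: pair_det => a b.
case: (cls a) => [oa|[l hl ea]]; case: (cls b) => [ob|[m hm eb]].
- exact: (block 0 a b hn (oa 0 hn) (ob 0 hn)).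
- exact: (block m a b hm (oa m hm) (okb m b hm eb)).
- exact: (block l a b hl (okb l a hl ea) (ob l hl)).
case: (ltngtP l m) => [hlm|hml|elm].
- apply: (subproj _ _ _ (@crossE S H2 n x z t w' Hsat zz zt xz xt tt l m hlm hm)).
  move=> v; rewrite !inE => /orP[]/eqP->.
    by case: ea => ->; rewrite eqxx ?orbT.
  by case: eb => ->; rewrite eqxx ?orbT.
- apply: (subproj _ _ _ (@crossE S H2 n x z t w' Hsat zz zt xz xt tt m l hml hl)).
  move=> v; rewrite !inE => /orP[]/eqP->.
    by case: ea => ->; rewrite eqxx ?orbT.
  by case: eb => ->; rewrite eqxx ?orbT.
- subst m; exact: (block l a b hl (okb l a hl ea) (okb l b hl eb)).
Qed.
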